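(* Let $(X,\|\cdot\|_X)\subset(Y,\|\cdot\|_Y)$ be normed spaces, $\theta,a\ge0$, $m\in\mathbb N_*$. Then $$B_{\alpha,\beta}(X,Y)\subset S_{\theta,m,a}(X,Y)\qquad\text{with }\alpha=\frac{\theta}{2m},\ \beta=2+a+\frac{\theta}{m}.$$
   Context: $B_X(R)=\{x\in X:\|x\|_X\le R\}$, $d_Y(y,A)=\inf_{x\in A}\|y-x\|_Y$, $B_{\alpha,\beta}(X,Y)=\{y\in Y:\limsup_{R\to\infty}R^\alpha(\ln R)^\beta d_Y(y,B_X(R))<\infty\}$. $\pi_{\theta,m,a}(y,(x_n)_n)=\sum_{n\ge1}\big(2^{n\theta}n^a\|y-x_n\|_Y+2^{-2nm}\|x_n\|_X\big)$, $\rho^{X,Y}_{\theta,m,a}(y)=\inf_{(x_n)\subset X}\pi_{\theta,m,a}(y,(x_n)_n)$, $S_{\theta,m,a}(X,Y)=\{y\in Y:\rho^{X,Y}_{\theta,m,a}(y)<\infty\}$. *)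

(* Defs.v *)
From Stdlib Require Import Reals ClassicalEpsilon.
Open Scope R_scope.

Record NormedSpace := {
  carrier :> Type;
  vzero : carrier;
  vadd : carrier -> carrier -> carrier;
  vopp : carrier -> carrier;
  vscal : R -> carrier -> carrier;
  vnorm : carrier -> R;
  vadd_assoc : forall u v w, vadd u (vadd v w) = vadd (vadd u v) w;
  vadd_comm : forall u v, vadd u v = vadd v u;
  vadd_0 : forall u, vadd u vzero = u;
  vadd_opp : forall u, vadd u (vopp u) = vzero;
  vscal_1 : forall u, vscal 1 u = u;
  vscal_assoc : forall r s u, vscal r (vscal s u) = vscal (r * s) u;
  vscal_distr_v : forall r u v, vscal r (vadd u v) = vadd (vscal r u) (vscal r v);
  vscal_distr_r : forall r s u, vscal (r + s) u = vadd (vscal r u) (vscal s u);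
  vnorm_eq0 : forall u, vnorm u = 0 -> u = vzero;
  vnorm_scal : forall r u, vnorm (vscal r u) = Rabs r * vnorm u;
  vnorm_triang : forall u v, vnorm (vadd u v) <= vnorm u + vnorm v
}.

Arguments vzero {_}. Arguments vadd {_}. Arguments vopp {_}.
Arguments vscal {_}. Arguments vnorm {_}.

Definition vsub {V : NormedSpace} (u v : V) : V := vadd u (vopp v).

(* X ⊂ Y: a linear injective embedding iota : X -> Y. *)
Definition embedding (X Y : NormedSpace) (iota : X -> Y) : Prop :=
  (forall u v, iota (vadd u v) = vadd (iota u) (iota v)) /\
  (forall r u, iota (vscal r u) = vscal r (iota u)) /\
  (forall u v, iota u = iota v -> u = v).

(* Infimum of a set of reals (meaningful for nonempty sets bounded below). *)
Definition is_glb (A : R -> Prop) (m : R) : Prop :=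
  (forall x, A x -> m <= x) /\ (forall b, (forall x, A x -> b <= x) -> b <= m).

Definition Rinf (A : R -> Prop) : R := epsilon (inhabits 0) (fun m => is_glb A m).

Definition ballX (X : NormedSpace) (Rad : R) (x : X) : Prop := vnorm x <= Rad.

Definition distY (X Y : NormedSpace) (iota : X -> Y) (y : Y) (Rad : R) : R :=
  Rinf (fun d => exists x : X, ballX X Rad x /\ d = vnorm (vsub y (iota x))).

(* B_{alpha,beta}(X,Y): limsup_{R->oo} R^alpha (ln R)^beta d_Y(y,B_X(R)) < oo,
   i.e. the (nonnegative for R>1) quantity is eventually bounded above. *)
Definition in_B (X Y : NormedSpace) (iota : X -> Y) (alpha beta : R) (y : Y) : Prop :=
  exists C R0, forall Rad, R0 <= Rad ->
    Rpower Rad alpha * Rpower (ln Rad) beta * distY X Y iota y Rad <= C.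

(* n-th term (n >= 1) of pi_{theta,m,a}(y,(x_n)) *)
Definition pi_term (X Y : NormedSpace) (iota : X -> Y) (theta : R) (m : nat) (a : R)
  (y : Y) (xs : nat -> X) (n : nat) : R :=
  Rpower 2 (INR n * theta) * Rpower (INR n) a * vnorm (vsub y (iota (xs n)))
  + Rpower 2 (- (2 * INR n * INR m)) * vnorm (xs n).

Definition pi_finite (X Y : NormedSpace) (iota : X -> Y) (theta : R) (m : nat) (a : R)
  (y : Y) (xs : nat -> X) : Prop :=
  exists l, infinite_sum (fun k => pi_term X Y iota theta m a y xs (S k)) l.

(* S_{theta,m,a}(X,Y) = {y | rho(y) < oo}; since rho is the infimum over
   sequences of pi in [0,oo], rho(y) < oo iff some sequence has finite pi. *)
Definition in_S (X Y : NormedSpace) (iota : X -> Y) (theta : R) (m : nat) (a : R)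
  (y : Y) : Prop :=
  exists xs : nat -> X, pi_finite X Y iota theta m a y xs.

(* Main.v *)
Require Import Defs.
From Stdlib Require Import Reals ClassicalEpsilon Classical Lra Lia Psatz.
From Coquelicot Require Import Coquelicot.
Open Scope R_scope.

Lemma vnorm_nonneg (V : NormedSpace) (u : V) : 0 <= vnorm u.
Proof.
  pose proof (vnorm_triang V u (vscal (-1) u)) as H.
  rewrite <- (vscal_1 V u) in H at 1.
  rewrite <- vscal_distr_r in H.
  rewrite vnorm_scal, vnorm_scal in H.
  replace (1 + -1) with 0 in H by ring.
  rewrite Rabs_R0 in H. replace (Rabs (-1)) with 1 in H by (rewrite Rabs_left; lra). lra.
Qed.

Lemma distY_glb (X Y : NormedSpace) (iota : X -> Y) (y : Y) (Rad : R) :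
  0 <= Rad ->
  is_glb (fun d => exists x : X, ballX X Rad x /\ d = vnorm (vsub y (iota x)))
         (distY X Y iota y Rad).
Proof.
  intros HR. unfold distY, Rinf. apply epsilon_spec.
  set (S := fun d => exists x : X, ballX X Rad x /\ d = vnorm (vsub y (iota x))).
  destruct (completeness (fun z => S (- z))) as [l [Hl1 Hl2]].
  - exists 0. intros z [x [_ Hz]]. pose proof (vnorm_nonneg _ (vsub y (iota x))). lra.
  - exists (- vnorm (vsub y (iota (vscal 0 vzero)))). exists (vscal 0 vzero).
    split; [|ring]. unfold ballX. rewrite vnorm_scal, Rabs_R0. lra.
  - exists (- l). split.
    + intros x Hx. assert (l >= - x) as H. { apply Rle_ge, Hl1. unfold S. rewrite Ropp_involutive. exact Hx. } lra.
    + intros b Hb. assert (l <= - b) as H. { apply Hl2. intros z Hz. specialize (Hb _ Hz). lra. } lra.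
Qed.

Lemma distY_approx (X Y : NormedSpace) (iota : X -> Y) (y : Y) (Rad eps : R) :
  0 <= Rad -> 0 < eps ->
  exists x : X, vnorm x <= Rad /\ vnorm (vsub y (iota x)) <= distY X Y iota y Rad + eps.
Proof.
  intros HR He. apply NNPP. intros Hn.
  destruct (distY_glb X Y iota y Rad HR) as [_ H2].
  assert (distY X Y iota y Rad + eps <= distY X Y iota y Rad); [|lra].
  apply H2. intros z [x [Hx Hz]].
  destruct (Rle_lt_dec (distY X Y iota y Rad + eps) z) as [h|h]; [exact h|].
  exfalso. apply Hn. exists x. split; [exact Hx|]. lra.
Qed.

Lemma sq_le_pow2_nat (k : nat) : ((k+4)^2 <= 2^(k+4))%nat.
Proof.
  induction k as [|k IH]. { simpl. lia. }
  replace (S k + 4)%nat with (S (k+4)) by lia.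
  rewrite (Nat.pow_succ_r' 2 (k+4)). generalize dependent (2^(k+4))%nat. intros p IH. rewrite !Nat.pow_2_r in *. nia.
Qed.

Lemma sq_le_pow2 (n : nat) : (4 <= n)%nat -> INR n ^ 2 <= 2 ^ n.
Proof.
  intros H. replace n with ((n-4)+4)%nat by lia.
  pose proof (sq_le_pow2_nat (n-4)) as h. apply le_INR in h.
  rewrite !pow_INR in h. simpl INR in h at 2. replace (1+1) with 2 in h by ring. exact h.
Qed.

Lemma inv_sq_series : ex_series (fun k => / (INR (S k))^2).
Proof.
  apply ex_series_Reals_1. apply growing_cv.
  - intros n. rewrite tech5. assert (0 < / (INR (S (S n)))^2); [|lra].
    apply Rinv_0_lt_compat. apply pow_lt. apply lt_0_INR. lia.
  - assert (Hb : forall n, sum_f_R0 (fun k => / (INR (S k))^2) n <= 2 - / INR (S n)).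
    { induction n as [|n IH].
      + simpl. lra.
      + rewrite tech5. rewrite S_INR with (n := S n).
        assert (0 < INR (S n)) by (apply lt_0_INR; lia).
        assert (/ (INR (S n) + 1)^2 <= / INR (S n) - / (INR (S n) + 1)); [|lra].
        replace (/ INR (S n) - / (INR (S n) + 1)) with (/ (INR (S n) * (INR (S n) + 1))) by (field; lra).
        apply Rinv_le_contravar. nra. nra. }
    exists 2. intros z [n ->]. specialize (Hb n).
    assert (0 < / INR (S n)) by (apply Rinv_0_lt_compat, lt_0_INR; lia); lra.
Qed.

Lemma exp_le' (x y : R) : x <= y -> exp x <= exp y.
Proof. intros [h|h]. - left; apply exp_increasing; exact h. - subst; lra. Qed.

Lemma ln2_pos : 0 < ln 2.
Proof. rewrite <- ln_1. apply ln_increasing; lra. Qed.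

Theorem mainTheorem15 (X Y : NormedSpace) (iota : X -> Y)
  (Hemb : embedding X Y iota) (theta a : R) (m : nat)
  (Htheta : 0 <= theta) (Ha : 0 <= a) (Hm : (0 < m)%nat) :
  forall y : Y,
    in_B X Y iota (theta / (2 * INR m)) (2 + a + theta / INR m) y ->
    in_S X Y iota theta m a y.
Proof.
  intros y [C [R0 HB]].
  set (M := INR m).
  assert (HM : 1 <= M). { unfold M. apply (le_INR 1). lia. }
  pose proof ln2_pos as Hl2.
  set (al := theta / (2 * M)) in HB.
  set (be := 2 + a + theta / M) in HB.
  assert (Hbe : 0 < be). { unfold be. assert (0 <= theta / M) by (apply Rdiv_le_0_compat; lra). lra. }
  pose (L := fun n : nat => 2 * INR n * M * ln 2 - 2 * ln (INR n)).
  pose (P := fun n : nat => exp (INR n * theta * ln 2) * exp (a * ln (INR n))).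
  pose (eps := fun n : nat => / (INR n ^ 2 * P n)).
  pose (Rn := fun n : nat => exp (L n)).
  pose (xs := fun n : nat => epsilon (inhabits vzero) (fun x : X => vnorm x <= Rn n /\
          vnorm (vsub y (iota x)) <= distY X Y iota y (Rn n) + eps n)).
  assert (HP : forall n, 0 < P n). { intros n. unfold P. apply Rmult_lt_0_compat; apply exp_pos. }
  assert (Hxs : forall n, (1 <= n)%nat -> vnorm (xs n) <= Rn n /\
          vnorm (vsub y (iota (xs n))) <= distY X Y iota y (Rn n) + eps n).
  { intros n Hn. unfold xs. apply epsilon_spec. apply distY_approx.
    - left. apply exp_pos.
    - unfold eps. apply Rinv_0_lt_compat. apply Rmult_lt_0_compat; [|apply HP].
      apply pow_lt. apply lt_0_INR. lia. }
  exists xs.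
  set (Cp := Rmax C 0).
  set (ll := ln (ln 2)).
  set (K1 := Cp * exp (- (be * ll))).
  destruct (INR_unbounded (R0 / ln 2)) as [N HN].
  set (N0 := (N + 4)%nat).
  assert (Hkey : forall n, (N0 <= n)%nat ->
            pi_term X Y iota theta m a y xs n <= (K1 + 2) * / INR n ^ 2).
  { intros n Hn.
    set (nr := INR n).
    assert (Hnr4 : 4 <= nr). { unfold nr. replace 4 with (INR 4) by (simpl; ring). apply le_INR. unfold N0 in Hn. lia. }
    assert (HnrN : INR N <= nr). { unfold nr. apply le_INR. unfold N0 in Hn. lia. }
    set (l := ln nr).
    assert (Hel : exp l = nr) by (unfold l; apply exp_ln; lra).
    assert (Hinv : / nr ^ 2 = exp (-2 * l)).
    { replace (-2 * l) with (- (l + l)) by ring. rewrite exp_Ropp, exp_plus, Hel. simpl. field. lra. }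
    assert (H2l : 2 * l <= nr * ln 2).
    { pose proof (sq_le_pow2 n ltac:(unfold N0 in Hn; lia)) as h.
      apply ln_le in h; [|apply pow_lt; fold nr; lra].
      rewrite !ln_pow in h; [|lra|fold nr; lra]. simpl INR in h. fold nr in h. unfold l. lra. }
    assert (HL : nr * ln 2 <= L n).
    { unfold L. fold nr. fold l. assert (0 <= nr * ln 2) by nra. nra. }
    assert (HR0 : R0 <= Rn n).
    { unfold Rn. pose proof (exp_ineq1_le (L n)).
      assert (R0 < INR N * ln 2). { apply Rgt_lt in HN. apply (Rmult_lt_compat_r (ln 2)) in HN; [|lra].
        unfold Rdiv in HN. rewrite Rmult_assoc, Rinv_l in HN; lra. }
      nra. }
    specialize (HB (Rn n) HR0). unfold Rpower, Rn in HB. rewrite ln_exp in HB.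
    destruct (Hxs n ltac:(unfold N0 in Hn; lia)) as [Hx1 Hx2].
    set (d := distY X Y iota y (Rn n)) in *.
    assert (Hd : 0 <= d).
    { destruct (distY_glb X Y iota y (Rn n) ltac:(left; apply exp_pos)) as [_ h].
      apply h. intros z [x [_ ->]]. apply vnorm_nonneg. }
    set (N1 := vnorm (vsub y (iota (xs n)))) in *.
    set (N2 := vnorm (xs n)) in *.
    assert (HN1 : 0 <= N1) by apply vnorm_nonneg.
    unfold pi_term, Rpower. fold nr. fold N1 N2. fold M. fold l.
    assert (F1 : exp (- (2 * nr * M) * ln 2) * exp (L n) = / nr ^ 2).
    { rewrite <- exp_plus, Hinv. f_equal. unfold L. fold nr l. ring. }
    assert (F2 : P n * eps n = / nr ^ 2).
    { unfold eps. fold nr. field. split; apply Rgt_not_eq; [lra | apply HP]. }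
    assert (Hll : l + ll <= ln (L n)).
    { unfold l, ll. rewrite <- ln_mult by lra. apply ln_le; nra. }
    set (u := exp (al * L n) * d).
    assert (Hu : 0 <= u) by (unfold u; pose proof (exp_pos (al * L n)); nra).
    assert (Hv : exp (be * l) * exp (be * ll) <= exp (be * ln (L n))).
    { rewrite <- exp_plus. apply exp_le'. nra. }
    assert (Huv : u * (exp (be * l) * exp (be * ll)) <= Cp).
    { apply Rle_trans with (u * exp (be * ln (L n))).
      - apply Rmult_le_compat_l; assumption.
      - unfold Cp. apply Rle_trans with C; [|apply Rmax_l]. unfold u, d, al, be, M, Rn in *. lra. }
    assert (HuK : u * exp (be * l) <= K1).
    { unfold K1. rewrite exp_Ropp.
      pose proof (exp_pos (be * ll)).
      apply Rmult_le_reg_r with (exp (be * ll)); [lra|].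
      replace (Cp * / exp (be * ll) * exp (be * ll)) with Cp by (field; apply Rgt_not_eq; lra). lra. }
    assert (F3 : P n * d = u * exp (be * l) * exp (-2 * l)).
    { unfold P, u. fold nr l.
      assert (E1 : exp (nr * theta * ln 2) = exp (al * L n) * exp (theta / M * l)).
      { rewrite <- exp_plus. f_equal. unfold al, L. fold nr l. field. lra. }
      assert (E2 : exp (be * l) * exp (-2 * l) = exp (a * l) * exp (theta / M * l)).
      { rewrite <- !exp_plus. f_equal. unfold be. ring. }
      rewrite E1. rewrite Rmult_assoc with (r1 := exp (al * L n) * d). rewrite E2. ring. }
    assert (HPN1 : P n * N1 <= P n * (d + eps n)).
    { apply Rmult_le_compat_l; [pose proof (HP n); lra | exact Hx2]. }
    assert (HN2 : exp (- (2 * nr * M) * ln 2) * N2 <= exp (- (2 * nr * M) * ln 2) * exp (L n)).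
    { apply Rmult_le_compat_l; [left; apply exp_pos | exact Hx1]. }
    assert (Hfin : u * exp (be * l) * exp (-2 * l) <= K1 * exp (-2 * l)).
    { apply Rmult_le_compat_r; [left; apply exp_pos | exact HuK]. }
    unfold P in HPN1, F2, F3.
    fold nr in HPN1, F2, F3. fold l in HPN1, F2, F3.
    rewrite Hinv in *. nra. }
  assert (Hex : ex_series (fun k => pi_term X Y iota theta m a y xs (S k))).
  { apply (ex_series_incr_n _ N0).
    apply (@ex_series_le R_AbsRing R_CompleteNormedModule) with (b := fun k => (K1 + 2) * / INR (S (N0 + k)) ^ 2).
    - intros k. change (norm ?x) with (Rabs x). rewrite Rabs_pos_eq.
      + apply Hkey. lia.
      + unfold pi_term, Rpower.
        pose proof (vnorm_nonneg _ (vsub y (iota (xs (S (N0 + k)))))).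
        pose proof (vnorm_nonneg _ (xs (S (N0 + k)))).
        pose proof (exp_pos (INR (S (N0 + k)) * theta * ln 2)).
        pose proof (exp_pos (a * ln (INR (S (N0 + k))))).
        pose proof (exp_pos (- (2 * INR (S (N0 + k)) * INR m) * ln 2)).
        apply Rplus_le_le_0_compat; apply Rmult_le_pos; try lra.
        apply Rmult_le_pos; lra.
    - apply (ex_series_incr_n (fun k => (K1 + 2) * / INR (S k) ^ 2) N0).
      exact (ex_series_scal_l (K1 + 2) _ inv_sq_series). }
  destruct Hex as [lim Hlim]. exists lim. apply is_series_Reals. exact Hlim.
Qed.
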